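(* Let $\boldsymbol{z}^{(0)}=(z^{(0)}_1,\dots,z^{(0)}_n)\in[-1,1]^n$ with $\sum_{j=1}^nz^{(0)}_j=0$. Define $\boldsymbol{z}^{(1)},\boldsymbol{z}^{(2)},\dots$ recursively: for each $r\ge0$, let $i$ be the first index at which $\boldsymbol{z}^{(r)}$ attains its minimum and $\ell$ the first index at which it attains its maximum; $\boldsymbol{z}^{(r+1)}$ agrees with $\boldsymbol{z}^{(r)}$ except that $z^{(r+1)}_i=z^{(r+1)}_\ell=(z^{(r)}_i+z^{(r)}_\ell)/2$. Then $\boldsymbol{z}^{(n)}\in[-\tfrac12,\tfrac12]^n$. *)

(* Defs.v *)
From mathcomp Require Import all_boot all_order all_algebra.
Set Implicit Arguments. Unset Strict Implicit. Unset Printing Implicit Defensive.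
Import Order.TTheory GRing.Theory Num.Theory.
Local Open Scope ring_scope.

Section Balancing.
Variables (R : realFieldType) (n : nat).

(* The vector z = (z_1,...,z_n) is represented as z : 'I_n -> R, with
   coordinate j (0-based) being z j.  The list of coordinates in order: *)
Definition coords (z : 'I_n -> R) : seq R := [seq z j | j <- enum 'I_n].

Definition first_min (z : 'I_n -> R) : nat :=
  find (fun x => all (fun y => x <= y) (coords z)) (coords z).
Definition first_max (z : 'I_n -> R) : nat :=
  find (fun x => all (fun y => y <= x) (coords z)) (coords z).

Definition balance_step (z : 'I_n -> R) : 'I_n -> R :=
  let i := first_min z in
  let l := first_max z in
  let a := (nth 0 (coords z) i + nth 0 (coords z) l) / 2 in
  fun j => if (val j == i) || (val j == l) then a else z j.

Definition balance_iter (r : nat) (z0 : 'I_n -> R) : 'I_n -> R :=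
  iter r balance_step z0.

End Balancing.

(* Main.v *)
Require Import Defs.
From mathcomp Require Import all_boot all_order all_algebra.
From mathcomp Require Import ring lra zify.
Import Order.TTheory GRing.Theory Num.Theory.
Local Open Scope ring_scope.

Lemma ex_min (R : realFieldType) n (z : 'I_n -> R) (i0 : 'I_n) :
  exists jm, forall j, z jm <= z j.
Proof.
case: (@arg_minP _ R 'I_n i0 predT z isT) => jm _ H.
by exists jm => j; apply: H.
Qed.

Lemma ex_max (R : realFieldType) n (z : 'I_n -> R) (i0 : 'I_n) :
  exists jm, forall j, z j <= z jm.
Proof.
case: (@arg_maxP _ R 'I_n i0 predT z isT) => jm _ H.
by exists jm => j; apply: H.
Qed.

Lemma step_spec (R : realFieldType) n (z : 'I_n -> R) (i0 : 'I_n) :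
  exists imin imax : 'I_n, (forall j, z imin <= z j) /\ (forall j, z j <= z imax) /\
   forall j, balance_step z j =
     if (j == imin) || (j == imax) then (z imin + z imax) / 2 else z j.
Proof.
have Hs : size (coords z) = n by rewrite size_map size_enum_ord.
have Hnth : forall k (Hk : (k < n)%N), nth 0 (coords z) k = z (Ordinal Hk).
  move=> k Hk; rewrite (nth_map i0) ?size_enum_ord //; congr z.
  by apply: val_inj; rewrite /= nth_enum_ord.
have Hin : forall j, z j \in coords z.
  by move=> j; apply: map_f; rewrite mem_enum.
have hasmin : has (fun x => all (fun y => x <= y) (coords z)) (coords z).
  have [jm Hjm] := ex_min _ _ z i0.
  apply/hasP; exists (z jm) => //; apply/allP => y /mapP [j _ ->]; exact: Hjm.
have hasmax : has (fun x => all (fun y => y <= x) (coords z)) (coords z).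
  have [jm Hjm] := ex_max _ _ z i0.
  apply/hasP; exists (z jm) => //; apply/allP => y /mapP [j _ ->]; exact: Hjm.
have Hi : (first_min z < n)%N by move: (hasmin); rewrite has_find Hs.
have Hl : (first_max z < n)%N by move: (hasmax); rewrite has_find Hs.
exists (Ordinal Hi), (Ordinal Hl).
split; [|split].
- move=> j; rewrite -Hnth; move/allP: (nth_find 0 hasmin); apply; exact: Hin.
- move=> j; rewrite -Hnth; move/allP: (nth_find 0 hasmax); apply; exact: Hin.
- move=> j; rewrite /balance_step -!Hnth //.
Qed.

Definition good {R : realFieldType} (x : R) := - (1 / 2) <= x <= 1 / 2.
Definition inv {R : realFieldType} {n} (z : 'I_n -> R) :=
  (forall j, -1 <= z j <= 1) /\ \sum_(j < n) z j = 0.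
Definition bad {R : realFieldType} {n} (z : 'I_n -> R) : {set 'I_n} :=
  [set j | ~~ good (z j)].

Lemma step_facts (R : realFieldType) n (z : 'I_n -> R) (i0 : 'I_n) :
  inv z -> inv (balance_step z) /\ bad (balance_step z) \subset bad z /\
   (bad z != set0 -> bad (balance_step z) \proper bad z).
Proof.
move=> [Hb Hs].
have [imin [imax [Hmin [Hmax Hst]]]] := step_spec _ _ z i0.
have Hm0 : z imin <= 0.
  have : \sum_(j < n) z imin <= \sum_(j < n) z j by apply: ler_sum => j _.
  rewrite Hs sumr_const card_ord pmulrn_lle0 //.
  by case: n i0 {Hb Hs Hmin Hmax Hst imin imax z} => [[]|].
have HM0 : 0 <= z imax.
  have : \sum_(j < n) z j <= \sum_(j < n) z imax by apply: ler_sum => j _.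
  rewrite Hs sumr_const card_ord pmulrn_lge0 //.
  by case: n i0 {Hb Hs Hmin Hmax Hst imin imax z Hm0} => [[]|].
have Hgood : good ((z imin + z imax) / 2).
  move: (Hb imin) (Hb imax) => /andP[h1 h2] /andP[h3 h4].
  rewrite /good; apply/andP; split; lra.
have Hsub : bad (balance_step z) \subset bad z.
  apply/subsetP => j; rewrite !inE Hst; case: ifP => // _.
  by rewrite Hgood.
split; [split|split] => //.
- move=> j; rewrite Hst; case: ifP => // _.
  move: Hgood; rewrite /good => /andP[h1 h2]; apply/andP; split; lra.
- apply: etrans Hs.
  have [E|NE] := eqVneq imin imax.
    apply: eq_bigr => j _; rewrite Hst; case: ifP => // /orP[] /eqP ->;
    rewrite ?E; field; done.
  have NE' : imax != imin by rewrite eq_sym.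
  rewrite (bigD1 imin) //= (bigD1 imax) /=; last by [].
  rewrite [\sum_(j < n) z j](bigD1 imin) //= (bigD1 imax (P := fun i => i != imin) (F := z)) //=.
  rewrite !Hst !eqxx /= orbT !addrA.
  congr (_ + _); first by field.
  apply: eq_bigr => j /andP[h1 h2]; rewrite Hst (negbTE h1) (negbTE h2) //.
- move=> Hne; rewrite properEneq Hsub andbT.
  apply/negP => /eqP E.
  case/set0Pn: Hne => j; rewrite inE => Hj.
  have : (imin \in bad z) || (imax \in bad z).
    rewrite !inE /good !negb_and -!ltNge; move: Hj; rewrite /good negb_and -!ltNge => /orP[h|h].
      by rewrite (le_lt_trans (Hmin j) h).
    by rewrite (lt_le_trans h (Hmax j)) !orbT.
  rewrite -E !inE !Hst !eqxx orbT /= Hgood.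
  by [].
Qed.

Lemma iter_facts (R : realFieldType) n (z0 : 'I_n -> R) (i0 : 'I_n) :
  inv z0 -> forall r, inv (balance_iter r z0) /\ (#|bad (balance_iter r z0)| <= n - r)%N.
Proof.
move=> H0; elim=> [|r [Hi Hc]].
  by split => //; rewrite subn0 -[X in (_ <= X)%N](card_ord n) max_card.
have [Hi' [Hs Hp]] := step_facts _ _ _ i0 Hi.
rewrite /balance_iter iterS -/(balance_iter r z0); split => //.
have [E|NE] := eqVneq (bad (balance_iter r z0)) set0.
  move: Hs; rewrite E subset0 => /eqP ->; by rewrite cards0.
have := proper_card (Hp NE); lia.
Qed.

Theorem lemma2p6 (R : realFieldType) (n : nat) (z0 : 'I_n -> R) :
  (forall j, -1 <= z0 j <= 1) ->
  \sum_(j < n) z0 j = 0 ->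
  forall j, - (1 / 2) <= balance_iter n z0 j <= 1 / 2.
Proof.
move=> Hb Hs j.
have [_ Hc] := iter_facts _ _ _ j (conj Hb Hs) n.
move: Hc; rewrite subnn leqn0 cards_eq0 => /eqP E.
have : j \notin bad (balance_iter n z0) by rewrite E inE.
by rewrite inE negbK.
Qed.
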